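(* Fix an infinite-to-one map $f$ of $\mathbb{Z}$ onto $\mathbb{Z}$ and consider the blue backward Markov chain on columns described in the context. Let $n\ge1$ and let $(a(i,j))_{-n\le i,j\le n}$ be a fixed array of $0$s and $1$s. Then for every $\epsilon>0$ there exists $m$ such that for all integers $M>m$, $N>m$ and all doubly infinite $0$-$1$ sequences $(A(i))_{i\in\mathbb{Z}}$, $(B(i))_{i\in\mathbb{Z}}$, $$\Big|P\big(X(i,j)=a(i,j),\,-n\le i,j\le n \,\big|\, X(i,M)=A(i)\ \forall i\big)-P\big(X(i,j)=a(i,j),\,-n\le i,j\le n \,\big|\, X(i,N)=B(i)\ \forall i\big)\Big|<\epsilon .$$
   Context: Random variables $X(i,j)\in\{0,1\}$, $i,j\in\mathbb{Z}$; for each $j$, the $j$-th column is $(X(i,j))_{i\in\mathbb{Z}}$. Blue transition rule (the chain runs backwards in $j$): given the column $j+1$, the variables $X(i,j)$, $i\in\mathbb{Z}$, are conditionally independent (and independent of the columns $j+2,j+3,\dots$), and $X(i,j)$ equals $X(f(i),j+1)$ with probability $2/3$ and equals $1-X(f(i),j+1)$ with probability $1/3$. The conditional probability given column $M$ (resp. $N$) means: fix that column and generate columns $M-1,M-2,\dots$ (resp. $N-1,N-2,\dots$) successively by the blue transition rule. *)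

(* Defs.v *)
From mathcomp Require Import all_boot all_order all_algebra.
From mathcomp Require Import reals.
Set Implicit Arguments. Unset Strict Implicit. Unset Printing Implicit Defensive.
Import Order.TTheory GRing.Theory Num.Theory.
Local Open Scope ring_scope.

Definition infinite_to_one_onto (f : int -> int) : Prop :=
  (forall y, exists x, f x = y) /\
  (forall y (k : nat), exists s : seq int,
      [/\ uniq s, (k <= size s)%N & all (fun x => f x == y) s]).

Definition wins (n : nat) : seq int := [seq (k%:Z - n%:Z) | k <- iota 0 (n.*2.+1)].
Definition window (n : nat) : seq (int * int) :=
  [seq (i, j) | i <- wins n, j <- wins n].

Definition steps (M j : int) : nat := if j < M then `|M - j|%N else 0%N.

(* Realisation of the blue chain by independent flips:
   X(i,j) = X(f i, j+1) XOR xi(i,j), with xi(i,j) iid, P(xi = true) = 1/3.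
   Hence, given column M = A, X(i,j) = A(f^(M-j) i) XOR
   (XOR_{k < M-j} xi(f^k i, j+k)). *)
Definition noise_sites (f : int -> int) (n : nat) (M : int) : seq (int * int) :=
  undup (flatten [seq [seq (iter k f p.1, p.2 + k%:Z) | k <- iota 0 (steps M p.2)]
                  | p <- window n]).

Definition Xval (f : int -> int) (M : int) (A : int -> bool)
    (xi : int * int -> bool) (p : int * int) : bool :=
  A (iter (steps M p.2) f p.1)
  (+) \big[addb/false]_(k <- iota 0 (steps M p.2)) xi (iter k f p.1, p.2 + k%:Z).

(* P( X(i,j) = a(i,j), -n <= i,j <= n | X(i,M) = A(i) for all i ) *)
Definition cond_prob (R : realType) (f : int -> int) (n : nat)
    (a : int -> int -> bool) (M : int) (A : int -> bool) : R :=
  let D := noise_sites f n M in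
  \sum_(xi : {ffun 'I_(size D) -> bool})
     (\prod_(t < size D) (if xi t then 1 / 3 else 2 / 3))
     * (if all (fun p => Xval f M A
                   (fun q => nth false [seq xi t | t <- enum 'I_(size D)] (index q D)) p
                 == a p.1 p.2) (window n)
        then 1 else 0).

(* Main.v *)
Require Import Defs.
From mathcomp Require Import all_boot all_order all_algebra.
From mathcomp Require Import reals.
From mathcomp Require Import zify ring lra.
From Stdlib Require Import FunctionalExtensionality Classical.
Import Order.TTheory GRing.Theory Num.Theory.
Set Implicit Arguments. Unset Strict Implicit. Unset Printing Implicit Defensive.
Local Open Scope ring_scope.

Section ExSec.
Variables (R : realFieldType) (T : eqType).

Definition upd (g : T -> bool) (x : T) (b : bool) : T -> bool :=
  fun q => if x == q then b else g q.

Fixpoint Ex (D : seq T) (F : (T -> bool) -> R) : R :=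
  match D with
  | [::] => F (fun _ => false)
  | x :: D' => 1/3 * Ex D' (fun g => F (upd g x true))
               + 2/3 * Ex D' (fun g => F (upd g x false))
  end.

Definition dep {U : Type} (P : T -> bool) (F : (T -> bool) -> U) :=
  forall g g', (forall q, P q -> g q = g' q) -> F g = F g'.

Lemma Ex_const D c : Ex D (fun _ => c) = c.
Proof. elim: D => //= x D ->; lra. Qed.

Lemma Ex_lin D a b F G :
  Ex D (fun g => a * F g + b * G g) = a * Ex D F + b * Ex D G.
Proof.
elim: D F G => [|x D IH] F G //=.
rewrite (IH (fun g => F (upd g x true)) (fun g => G (upd g x true))).
rewrite (IH (fun g => F (upd g x false)) (fun g => G (upd g x false))).
ring.
Qed.

Lemma Ex_bound D F : (forall g, 0 <= F g <= 1) -> 0 <= Ex D F <= 1.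
Proof.
elim: D F => [|x D IH] F hF /=; first exact: hF.
have /andP[h1 h2] := IH (fun g => F (upd g x true)) (fun g => hF _).
have /andP[h3 h4] := IH (fun g => F (upd g x false)) (fun g => hF _).
apply/andP; split; lra.
Qed.

Lemma dep_upd U P (F : (T -> bool) -> U) x b :
  dep P F -> dep P (fun g => F (upd g x b)).
Proof.
move=> hF g g' h; apply: hF => q Pq; rewrite /upd; case: (x == q) => //; exact: h.
Qed.

Lemma dep_const U P (F : (T -> bool) -> U) x (b : bool) :
  dep P F -> ~~ P x -> (fun g => F (upd g x b)) = F.
Proof.
move=> hF Px; apply: functional_extensionality => g; apply: hF => q Pq.
rewrite /upd; case: eqP => // exq; by move: Px; rewrite exq Pq.
Qed.

Lemma Ex_out D F P x : dep P F -> ~~ P x -> Ex (x :: D) F = Ex D F.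
Proof.
move=> hF Px /=; rewrite (dep_const true hF Px) (dep_const false hF Px); lra.
Qed.

Lemma upd_same g x b c : upd (upd g x c) x b = upd g x b.
Proof. apply: functional_extensionality => q; rewrite /upd; by case: (x == q). Qed.

Lemma upd_comm g x y b c : x != y -> upd (upd g y c) x b = upd (upd g x b) y c.
Proof.
move=> hxy; apply: functional_extensionality => q; rewrite /upd.
case: (eqVneq x q) => [<-|_] //; by rewrite eq_sym (negbTE hxy).
Qed.

Lemma Ex_upd D F x : x \in D ->
  Ex D F = 1/3 * Ex D (fun g => F (upd g x true))
           + 2/3 * Ex D (fun g => F (upd g x false)).
Proof.
elim: D F => [|y D IH] F //=.
move=> xyD; case: (eqVneq x y) => [exy|hxy].
  rewrite exy.
  have E : forall b c, (fun g => F (upd (upd g y c) y b)) = (fun g => F (upd g y b)).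
    by move=> b c; apply: functional_extensionality => g; rewrite upd_same.
  rewrite !E; lra.
move: xyD; rewrite in_cons (negbTE hxy) /= => xD.
rewrite (IH (fun g => F (upd g y true)) xD) (IH (fun g => F (upd g y false)) xD) /=.
have E : forall b c, (fun g => F (upd (upd g y c) x b)) = (fun g => F (upd (upd g x b) y c)).
  by move=> b c; apply: functional_extensionality => g; rewrite upd_comm.
rewrite !E; ring.
Qed.

Lemma Ex_dup D F x : x \in D -> Ex (x :: D) F = Ex D F.
Proof. by move=> xD; rewrite [RHS](Ex_upd F xD). Qed.

Lemma Ex_sub L D F : {subset L <= D} -> Ex (L ++ D) F = Ex D F.
Proof.
elim: L => [|x L IH] // hs; rewrite cat_cons Ex_dup.
  by apply: IH => y yL; apply: hs; rewrite in_cons yL orbT.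
by rewrite mem_cat hs ?orbT // in_cons eqxx.
Qed.

Lemma Ex_cat_dep L D F : dep (fun q => q \in L) F -> Ex (L ++ D) F = Ex L F.
Proof.
elim: L F => [|x L IH] F hF /=.
  have -> : F = fun _ => F (fun _ => false).
    by apply: functional_extensionality => g; apply: hF.
  by rewrite Ex_const.
have hd : forall b, dep (fun q => q \in L) (fun g => F (upd g x b)).
  move=> b g g' h; apply: hF => q; rewrite /upd /= in_cons [q == x]eq_sym.
  case: (x == q) => //= qL. exact: h qL.
by rewrite !IH.
Qed.

Lemma Ex_restrict L D F : dep (fun q => q \in L) F -> {subset L <= D} -> Ex D F = Ex L F.
Proof. by move=> hF hs; rewrite -(Ex_sub F hs) Ex_cat_dep. Qed.

Lemma Ex_prod D P1 P2 F1 F2 : dep P1 F1 -> dep P2 F2 ->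
  (forall q, P1 q -> ~~ P2 q) ->
  Ex D (fun g => F1 g * F2 g) = Ex D F1 * Ex D F2.
Proof.
move=> + + hdis; elim: D F1 F2 => [|x D IH] F1 F2 h1 h2 //=.
case P2x : (P2 x).
  have P1x : ~~ P1 x by apply/negP => /hdis; rewrite P2x.
  rewrite !IH //; try exact: dep_upd.
  rewrite (dep_const true h1 P1x) (dep_const false h1 P1x). by field.
have nP2x : ~~ P2 x by rewrite P2x.
rewrite !IH //; try exact: dep_upd.
rewrite (dep_const true h2 nP2x) (dep_const false h2 nP2x). by field.
Qed.

Definition bigxor (L : seq T) (g : T -> bool) := \big[addb/false]_(q <- L) g q.
Definition ind (b : bool) : R := if b then 1 else 0.

Lemma Ex_xor L b : uniq L ->
  Ex L (fun g => ind (b (+) bigxor L g)) =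
  (1 + (if b then 1 else -1) * (1/3) ^+ (size L)) / 2.
Proof.
elim: L b => [|x L IH] b /=.
  by rewrite /bigxor big_nil addbF expr0; case: b; rewrite /ind; lra.
move=> /andP[xL uL].
have E : forall c, (fun g => ind (b (+) bigxor (x :: L) (upd g x c))) =
                   (fun g => ind ((b (+) c) (+) bigxor L g)).
  move=> c; apply: functional_extensionality => g.
  rewrite /bigxor big_cons {1}/upd eqxx -addbA; congr (ind (_ (+) (_ (+) _))).
  apply: eq_big_seq => q qL; rewrite /upd; case: eqP => // exq.
  by move: xL; rewrite exq qL.
rewrite !E !IH // addbT addbF exprS.
clear E; set p := (1/3) ^+ size L.
case: b => /=; lra.
Qed.

Lemma Ex_add D F G : Ex D (fun g => F g + G g) = Ex D F + Ex D G.
Proof.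
elim: D F G => [|x D IH] F G //=.
rewrite (IH (fun g => F (upd g x true))) (IH (fun g => F (upd g x false))); ring.
Qed.

Lemma Ex_sub1 D F : Ex D (fun g => 1 - F g) = 1 - Ex D F.
Proof.
elim: D F => [|x D IH] F //=.
rewrite (IH (fun g => F (upd g x true))) (IH (fun g => F (upd g x false))); lra.
Qed.

Definition YQT := (((T -> bool) -> bool) * (T -> bool))%type.

Fixpoint okQ (D : seq T) (P : T -> bool) (delta : R) (YQ : seq YQT) : Prop :=
  match YQ with
  | [::] => True
  | yq :: YQ' =>
     [/\ (forall q, yq.2 q -> ~~ P q && all (fun yq' => ~~ yq'.2 q) YQ'),
         dep yq.2 yq.1,
         `|Ex D (fun g => ind (yq.1 g)) - 1/2| <= delta & okQ D P delta YQ']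
  end.

Fixpoint V (D : seq T) (r : nat) (H : seq bool -> (T -> bool) -> R) : R :=
  match r with
  | 0 => Ex D (H [::])
  | r'.+1 => (V D r' (fun zs => H (true :: zs)) + V D r' (fun zs => H (false :: zs))) / 2
  end.

Lemma V_bound D r H : (forall zs g, 0 <= H zs g <= 1) -> 0 <= V D r H <= 1.
Proof.
elim: r H => [|r IH] H hH /=; first exact: Ex_bound.
have /andP[h1 h2] := IH (fun zs => H (true :: zs)) (fun zs => hH _).
have /andP[h3 h4] := IH (fun zs => H (false :: zs)) (fun zs => hH _).
apply/andP; split; lra.
Qed.

Lemma V_eq D D' r H : (forall zs, Ex D (H zs) = Ex D' (H zs)) -> V D r H = V D' r H.
Proof.
elim: r H => [|r IH] H hH /=; first exact: hH.
by rewrite (IH (fun zs => H (true :: zs))) ?(IH (fun zs => H (false :: zs))).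
Qed.

Lemma all_neg_has (A : Type) (p : A -> bool) s : all (fun y => ~~ p y) s = ~~ has p s.
Proof. by elim: s => //= y s ->; rewrite negb_or. Qed.

Lemma okQ_map D P delta YQ g g' : okQ D P delta YQ ->
  (forall q, has (fun yq => yq.2 q) YQ -> g q = g' q) ->
  map (fun yq => yq.1 g) YQ = map (fun yq => yq.1 g') YQ.
Proof.
elim: YQ => [|[Y Q] YQ IH] //= [_ hd _ hok] h.
congr (_ :: _); last by apply: IH => // q hq; apply: h; rewrite hq orbT.
by apply: hd => q Qq; apply: h; rewrite /= Qq.
Qed.

Lemma arith (p Et Ef Vt Vf r d : R) : 0 <= p <= 1 -> 0 <= Vt <= 1 -> 0 <= Vf <= 1 ->
  `|Et - Vt| <= r * d -> `|Ef - Vf| <= r * d -> `|p - 1/2| <= d ->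
  `|p * Et + (1 - p) * Ef - (Vt + Vf) / 2| <= (r + 1) * d.
Proof.
move=> /andP[p0 p1] /andP[t0 t1] /andP[f0 f1].
rewrite !ler_norml => /andP[a1 a2] /andP[b1 b2] /andP[c1 c2].
have e1 : p * (Et - Vt) <= p * (r * d) by apply: ler_wpM2l.
have e2 : - (p * (r * d)) <= p * (Et - Vt) by rewrite -mulrN; apply: ler_wpM2l.
have e3 : (1 - p) * (Ef - Vf) <= (1 - p) * (r * d) by apply: ler_wpM2l; lra.
have e4 : - ((1 - p) * (r * d)) <= (1 - p) * (Ef - Vf) by rewrite -mulrN; apply: ler_wpM2l; lra.
have e5 : 0 <= (d - (p - 1/2)) * (1 - (Vt - Vf)) by apply: mulr_ge0; lra.
have e6 : 0 <= (d + (p - 1/2)) * (1 + (Vt - Vf)) by apply: mulr_ge0; lra.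
have e7 : 0 <= (d - (p - 1/2)) * (1 + (Vt - Vf)) by apply: mulr_ge0; lra.
have e8 : 0 <= (d + (p - 1/2)) * (1 - (Vt - Vf)) by apply: mulr_ge0; lra.
apply/andP; split; nra.
Qed.

Lemma Gmain D delta YQ P H :
  (forall zs g, 0 <= H zs g <= 1) -> (forall zs, dep P (H zs)) -> okQ D P delta YQ ->
  `|Ex D (fun g => H (map (fun yq => yq.1 g) YQ) g) - V D (size YQ) H|
     <= (size YQ)%:R * delta.
Proof.
elim: YQ H => [|[Y Q] YQ IH] H hH hP /=.
  by move=> _; rewrite subrr normr0 mul0r.
move=> [hdis hY hb hok] /=.
set G := fun b g => H (b :: map (fun yq => yq.1 g) YQ) g.
set Pb := fun q => P q || has (fun yq => yq.2 q) YQ.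
have hG : forall b, dep Pb (G b).
  move=> b g g' h; rewrite /G (okQ_map hok (g' := g')); last first.
    by move=> q hq; apply: h; rewrite /Pb hq orbT.
  by apply: (hP (b :: _)) => q Pq; apply: h; rewrite /Pb Pq.
have hdis' : forall q, Q q -> ~~ Pb q.
  move=> q /hdis /andP[nP hA]; by rewrite /Pb negb_or nP -all_neg_has.
have hY1 : dep Q (fun g => ind (Y g)).
  by move=> g g' h; rewrite (hY g g' h).
have hY2 : dep Q (fun g => 1 - ind (Y g)).
  by move=> g g' h; rewrite (hY g g' h).
have -> : (fun g => H (Y g :: [seq yq.1 g | yq <- YQ]) g) =
          (fun g => (ind (Y g) * G true g) + ((1 - ind (Y g)) * G false g)).
  apply: functional_extensionality => g; rewrite /G /ind; case: (Y g); ring.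
rewrite Ex_add (Ex_prod _ hY1 (hG true) hdis') (Ex_prod _ hY2 (hG false) hdis') Ex_sub1.
have hp : 0 <= Ex D (fun g => ind (Y g)) <= 1.
  by apply: Ex_bound => g; rewrite /ind; case: (Y g); rewrite ?lexx ?ler01.
have IHt := IH (fun zs => H (true :: zs)) (fun zs => hH _) (fun zs => hP _) hok.
have IHf := IH (fun zs => H (false :: zs)) (fun zs => hH _) (fun zs => hP _) hok.

have hVt := V_bound D (size YQ) (fun zs g => hH (true :: zs) g).
have hVf := V_bound D (size YQ) (fun zs g => hH (false :: zs) g).
have A := arith hp hVt hVf IHt IHf hb. move: A; rewrite natr1 => A. exact: A.
Qed.

End ExSec.

Section Bridge.
Variables (R : realFieldType) (T : eqType).

Definition fcons k (b : bool) (xi : {ffun 'I_k -> bool}) : {ffun 'I_k.+1 -> bool} :=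
  [ffun i => if unlift ord0 i is Some j then xi j else b].

Lemma sum_ffunS k (F : {ffun 'I_k.+1 -> bool} -> R) :
  \sum_(xi : {ffun 'I_k.+1 -> bool}) F xi =
  \sum_(b : bool) \sum_(xi : {ffun 'I_k -> bool}) F (fcons b xi).
Proof.
rewrite pair_big /=.
rewrite (reindex (fun p : bool * {ffun 'I_k -> bool} => fcons p.1 p.2)) //.
exists (fun xi : {ffun 'I_k.+1 -> bool} => (xi ord0, [ffun j : 'I_k => xi (lift ord0 j)])) => [[b xi] _|xi _] /=.
  congr (_, _); first by rewrite ffunE unlift_none.
  by apply/ffunP => j; rewrite !ffunE liftK.
apply/ffunP => i; rewrite ffunE; case: unliftP => [j|] ->; by rewrite ?ffunE.
Qed.

Lemma bridge (D : seq T) (G : (T -> bool) -> R) :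
  \sum_(xi : {ffun 'I_(size D) -> bool})
     (\prod_(t < size D) (if xi t then 1 / 3 else 2 / 3))
     * G (fun q => nth false [seq xi t | t <- enum 'I_(size D)] (index q D))
  = Ex D G.
Proof.
elim: D G => [|x D IH] G /=.
  rewrite (big_pred1 [ffun i => false]); last first.
    move=> xi /=; apply/esym/eqP/ffunP => i; exfalso; by case: i.
  rewrite big_ord0 mul1r; congr G; apply: functional_extensionality => q.
  have -> : enum 'I_0 = [::] by apply/size0nil; rewrite size_enum_ord.
  by [].
rewrite sum_ffunS big_bool /=.
rewrite -(IH (fun g => G (upd g x true))) -(IH (fun g => G (upd g x false))).
rewrite !mulr_sumr; congr (_ + _); apply: eq_bigr => xi _;
  rewrite big_ord_recl enum_ordSl /= !ffunE unlift_none mulrA; congr (_ * _ * G _).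
- by apply: eq_bigr => i _; rewrite ffunE liftK.
- apply: functional_extensionality => q; rewrite /upd; case: (x == q) => //=.
  by rewrite -map_comp; congr (nth _ _ _); apply: eq_map => i /=; rewrite ffunE liftK.
- by apply: eq_bigr => i _; rewrite ffunE liftK.
- apply: functional_extensionality => q; rewrite /upd; case: (x == q) => //=.
  by rewrite -map_comp; congr (nth _ _ _); apply: eq_map => i /=; rewrite ffunE liftK.
Qed.

End Bridge.

Lemma uniq_map_inj (U V : eqType) (h : U -> V) (s : seq U) x y :
  uniq (map h s) -> x \in s -> y \in s -> h x = h y -> x = y.
Proof.
elim: s => //= z s IH /andP[hz hu].
rewrite !in_cons => /orP[/eqP->|xs] /orP[/eqP->|ys] // E.
- by move: hz; rewrite E (map_f h ys).
- by move: hz; rewrite -E (map_f h xs).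
- exact: IH.
Qed.

Section Main.
Variables (f : int -> int) (n : nat).

Lemma window_bound p : p \in window n -> (- n%:Z <= p.2) && (p.2 <= n%:Z).
Proof.
case/allpairsP => -[i j] [_ /= hj ->] /=.
move: hj; rewrite /wins => /mapP [k]; rewrite mem_iota => /andP[_ hk] ->.
rewrite -mul2n in hk; lia.
Qed.

Lemma steps_mono c M j : c <= M -> (steps c j <= steps M j)%N.
Proof. rewrite /steps; case: ifP; case: ifP; lia. Qed.

Lemma Xval_split M c A g i j : j < c -> c <= M ->
  Xval f M A g (i, j) = Xval f c (fun s => Xval f M A g (s, c)) g (i, j).
Proof.
move=> hjc hcM; rewrite /Xval /=.
set a := steps c j; set b := steps M c.
have ha : a = `|c - j|%N by rewrite /a /steps hjc.
have hs : steps M j = (a + b)%N.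
  rewrite ha /b /steps; case: ifP; case: ifP; lia.
rewrite hs iotaD add0n big_cat /=.
have -> : iota a b = map (addn a) (iota 0 b) by rewrite -iotaDl addn0.
rewrite big_map.
have -> : iter (a + b) f i = iter b f (iter a f i) by rewrite addnC iterD.
have -> : \big[addb/false]_(k <- iota 0 b) g (iter (a + k) f i, j + (a + k)%N%:Z)
        = \big[addb/false]_(k <- iota 0 b) g (iter k f (iter a f i), c + k%:Z).
  apply: eq_bigr => k _.
  have -> : iter (a + k) f i = iter k f (iter a f i) by rewrite addnC iterD.
  by have -> : j + (a + k)%N%:Z = c + k%:Z by rewrite ha; lia.
set X := A _; set Y := \big[addb/false]_(k <- iota 0 a) _; set Z := \big[addb/false]_(k <- iota 0 b) _.
by case: X; case: Y; case: Z.
Qed.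

Lemma ns_mem M p k : p \in window n -> (k < steps M p.2)%N ->
  (iter k f p.1, p.2 + k%:Z) \in noise_sites f n M.
Proof.
move=> hp hk; rewrite /noise_sites mem_undup; apply/flattenP.
exists [seq (iter k f p.1, p.2 + k%:Z) | k <- iota 0 (steps M p.2)].
  by apply/mapP; exists p.
by apply/mapP; exists k; rewrite // mem_iota.
Qed.

Lemma ns_memE M q : q \in noise_sites f n M -> exists p k,
  [/\ p \in window n, (k < steps M p.2)%N & q = (iter k f p.1, p.2 + k%:Z)].
Proof.
rewrite mem_undup => /flattenP [s /mapP [p hp ->] /mapP [k]].
rewrite mem_iota add0n => /andP[_ hk] ->; by exists p, k.
Qed.

Lemma ns_sub c M : c <= M -> {subset noise_sites f n c <= noise_sites f n M}.
Proof.
move=> h q /ns_memE [p [k [hp hk ->]]]; apply: ns_mem => //.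
exact: leq_trans hk (steps_mono _ h).
Qed.

Lemma ns_col c q : q \in noise_sites f n c -> q.2 < c.
Proof.
move=> /ns_memE [[i j] [k [hp hk ->]]] /=; move: hk; rewrite /steps /=; case: ifP => h1 h2 /=; lia.
Qed.

Lemma Xval_dep M Z g g' p : p \in window n ->
  (forall q, q \in noise_sites f n M -> g q = g' q) -> Xval f M Z g p = Xval f M Z g' p.
Proof.
move=> hp h; rewrite /Xval; congr (_ (+) _); apply: eq_big_seq => k.
rewrite mem_iota add0n => /andP[_ hk]; apply: h; exact: ns_mem.
Qed.

Definition src (c : int) := undup [seq iter (steps c p.2) f p.1 | p <- window n].

Lemma steps_succ c j : j < c -> steps (c + 1) j = (steps c j).+1.
Proof. rewrite /steps; case: ifP; case: ifP; lia. Qed.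

Lemma src_succ c : n%:Z < c -> src (c + 1) =i map f (src c).
Proof.
move=> hc x; rewrite /src mem_undup; apply/mapP/mapP => [[[i j] hp ->]|[y]].
  exists (iter (steps c j) f i); first by rewrite mem_undup; apply/mapP; exists (i, j).
  have /andP[_ /= hj] := window_bound hp.
  have hjc : j < c by lia.
  by rewrite /= steps_succ ?iterS.
rewrite mem_undup => /mapP [[i j] hp ->] ->; exists (i, j) => //.
have /andP[_ /= hj] := window_bound hp.
have hjc : j < c by lia.
by rewrite /= steps_succ ?iterS.
Qed.

Lemma src_size_eq c : n%:Z < c -> size (src (c + 1)) = size (undup (map f (src c))).
Proof.
move=> hc; apply: perm_size; apply: uniq_perm; try exact: undup_uniq.
by move=> x; rewrite mem_undup; exact: src_succ.
Qed.

Lemma src_size_le c : n%:Z < c -> (size (src (c + 1)) <= size (src c))%N.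
Proof.
move=> hc; rewrite src_size_eq //; apply: leq_trans (size_undup _) _.
by rewrite size_map.
Qed.

Lemma src_inj c : n%:Z < c -> size (src (c + 1)) = size (src c) ->
  forall x y, x \in src c -> y \in src c -> f x = f y -> x = y.
Proof.
move=> hc hs x y; apply: uniq_map_inj.
rewrite -[uniq _]negbK -ltn_size_undup -src_size_eq // hs size_map ltnn //.
Qed.



Lemma noninc_le (u : nat -> nat) : (forall t, (u t.+1 <= u t)%N) ->
  forall t t', (t <= t')%N -> (u t' <= u t)%N.
Proof.
move=> hu t t'; elim: t' => [|t' IH] h.
  by rewrite leqn0 in h; move/eqP: h => ->.
case: (eqVneq t t'.+1) => [->//|ne].
have h' : (t <= t')%N by lia.
exact: leq_trans (hu t') (IH h').
Qed.

Lemma stab_nat (u : nat -> nat) : (forall t, (u t.+1 <= u t)%N) ->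
  forall B t, (u t <= B)%N ->
  exists t0, (t <= t0)%N /\ forall t', (t0 <= t')%N -> u t'.+1 = u t'.
Proof.
move=> hu; elim=> [|B IH] t ht.
  exists t; split => // t' h.
  have h1 := noninc_le hu (leq_trans h (leqnSn t')).
  have h2 := noninc_le hu h.
  lia.
case: (classic (forall t', (t <= t')%N -> u t'.+1 = u t')) => [H|H].
  by exists t.
have [t' ht'] : exists t', ~ ((t <= t')%N -> u t'.+1 = u t') by apply: not_all_ex_not.
have [h1 h2] := imply_to_and _ _ ht'.
have h3 := hu t'.
have h4 := noninc_le hu h1.
have [t0 [h5 h6]] := IH t'.+1 ltac:(lia).
exists t0; split => //; lia.
Qed.

Lemma stab : exists c0 : int, n%:Z < c0 /\
  forall c, c0 <= c -> size (src (c + 1)) = size (src c).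
Proof.
pose u t := size (src (n%:Z + 1 + t%:Z)).
have hu : forall t, (u t.+1 <= u t)%N.
  move=> t; rewrite /u.
  have -> : n%:Z + 1 + (t.+1)%:Z = (n%:Z + 1 + t%:Z) + 1 by lia.
  apply: src_size_le; lia.
have [t0 [_ H]] := stab_nat hu (leqnn (u 0%N)).
exists (n%:Z + 1 + t0%:Z); split; first lia.
move=> c hc.
have hc' : c = n%:Z + 1 + ((absz (c - (n%:Z + 1))%R))%:Z by lia.
have := H (absz (c - (n%:Z + 1))%R) ltac:(lia).
rewrite /u => E; rewrite hc' -E; congr (size (src _)); lia.
Qed.

Lemma inj_iter c0 : n%:Z < c0 ->
  (forall c, c0 <= c -> size (src (c + 1)) = size (src c)) ->
  forall t c s s', c0 <= c -> s \in src c -> s' \in src c ->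
  iter t f s = iter t f s' -> s = s'.
Proof.
move=> hc0 hst; elim=> [|t IH] c s s' hc hs hs' E; first exact: E.
rewrite !iterSr in E.
have hnc : n%:Z < c by lia.
have hfs : forall x, x \in src c -> f x \in src (c + 1).
  by move=> x hx; rewrite src_succ //; exact: map_f.
have E2 := IH (c + 1) (f s) (f s') ltac:(lia) (hfs _ hs) (hfs _ hs') E.
exact: (src_inj hnc (hst c hc) hs hs' E2).
Qed.

End Main.

Section Final.
Variables (R : realType) (f : int -> int) (n : nat) (a : int -> int -> bool).
Variable c0 : int.
Hypothesis hc0 : n%:Z < c0.
Hypothesis hst : forall c, c0 <= c -> size (src f n (c + 1)) = size (src f n c).

Definition Hf (zs : seq bool) (g : int * int -> bool) : R :=
  @ind R (all (fun p => Xval f c0 (fun s => nth false zs (index s (src f n c0))) g p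
                        == a p.1 p.2) (window n)).

Definition Yf (M : int) (A : int -> bool) (s : int) (g : int * int -> bool) :=
  Xval f M A g (s, c0).

Definition Qf (s : int) (q : int * int) :=
  (c0 <= q.2) && (q.1 == iter (absz (q.2 - c0)%R) f s).

Lemma in_src_win p : p \in window n -> iter (steps c0 p.2) f p.1 \in src f n c0.
Proof. by move=> hp; rewrite /src mem_undup; apply/mapP; exists p. Qed.

Lemma src_win s : s \in src f n c0 ->
  exists2 p, p \in window n & s = iter (steps c0 p.2) f p.1.
Proof. by rewrite /src mem_undup => /mapP. Qed.

Lemma Xval_Z c Z1 Z2 g p : Z1 (iter (steps c p.2) f p.1) = Z2 (iter (steps c p.2) f p.1) ->
  Xval f c Z1 g p = Xval f c Z2 g p.
Proof. by rewrite /Xval => ->. Qed.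

Lemma Qdep M A s : dep (Qf s) (Yf M A s).
Proof.
move=> g g' h; rewrite /Yf /Xval /=; congr (_ (+) _); apply: eq_bigr => k _; apply: h.
rewrite /Qf /=; apply/andP; split; first lia.
rewrite (_ : absz (c0 + k%:Z - c0)%R = k) //; lia.
Qed.

Lemma bias M A s : c0 < M -> s \in src f n c0 ->
  `|Ex (noise_sites f n M) (fun g => @ind R (Yf M A s g)) - 1/2|
     <= (1/3) ^+ (steps M c0) / 2.
Proof.
move=> hM hs.
set K := steps M c0.
set Ls := [seq (iter k f s, c0 + k%:Z) | k <- iota 0 K].
have E : (fun g => @ind R (Yf M A s g)) =
         (fun g => @ind R (A (iter K f s) (+) bigxor Ls g)).
  by apply: functional_extensionality => g; rewrite /Yf /Xval /bigxor big_map.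
have uLs : uniq Ls.
  by rewrite map_inj_uniq ?iota_uniq // => k k' [] _ h; lia.
have dLs : dep (fun q => q \in Ls) (fun g => @ind R (A (iter K f s) (+) bigxor Ls g)).
  move=> g g' h; congr (@ind R (_ (+) _)); exact: eq_big_seq.
have sLs : {subset Ls <= noise_sites f n M}.
  move=> q /mapP [k]; rewrite mem_iota add0n => /andP[_ hk] ->.
  have [[i j] hp hsE] := src_win hs.
  have /andP[_ /= hj] := window_bound hp.
  have hK : K = absz (M - c0)%R by rewrite /K /steps hM.
  have hsj : steps c0 j = absz (c0 - j)%R by rewrite /steps ifT //; lia.
  have H := @ns_mem f n M (i, j) (k + steps c0 j)%N hp.
  rewrite /= in H hsE.
  have H2 : (k + steps c0 j < steps M j)%N.
    rewrite hsj /steps ifT; lia.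
  move: (H H2); rewrite hsE iterD.
  by rewrite (_ : j + (k + steps c0 j)%N%:Z = c0 + k%:Z) //; lia.
rewrite E (Ex_restrict dLs sLs) Ex_xor // size_map size_iota.
set p := (1/3 : R) ^+ K.
have p0 : 0 <= p by apply: exprn_ge0; lra.
case: (A _) => /=.
  rewrite (_ : (1 + 1 * p) / 2 - 1 / 2 = p / 2); last lra.
  rewrite ger0_norm; lra.
rewrite (_ : (1 + -1 * p) / 2 - 1 / 2 = - (p / 2)); last lra.
rewrite normrN ger0_norm; lra.
Qed.

Lemma approx M A : c0 < M ->
  `|cond_prob R f n a M A - V (noise_sites f n c0) (size (src f n c0)) Hf|
     <= (size (src f n c0))%:R * ((1/3) ^+ (steps M c0) / 2).
Proof.
move=> hM.
set S := src f n c0. set D := noise_sites f n M. set L0 := noise_sites f n c0.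
set YQ := [seq (Yf M A s, Qf s) | s <- S].
have hb : forall zs g, 0 <= Hf zs g <= 1.
  by move=> zs g; rewrite /Hf /ind; case: (all _ _); rewrite ?lexx ?ler01.
have hd : forall zs, dep (fun q => q \in L0) (Hf zs).
  move=> zs g g' h; rewrite /Hf; congr ind; apply: eq_in_all => p hp.
  by rewrite (@Xval_dep f n c0 _ g g' p hp h).
have hok : forall l : seq int, uniq l -> {subset l <= S} ->
    okQ D (fun q => q \in L0) ((1/3 : R) ^+ (steps M c0) / 2) [seq (Yf M A s, Qf s) | s <- l].
  elim=> //= s l IH /andP[sl ul] hsub.
  have hsS : s \in S by apply: hsub; rewrite in_cons eqxx.
  split.
  - move=> [q1 q2] /andP[/= hq1 /eqP /= hq2]; apply/andP; split.
      by apply/negP => /ns_col /= h; lia.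
    rewrite all_map; apply/allP => s' s'l /=; apply/negP; rewrite /Qf => /andP[_ /eqP hq2'].
    have hs'S : s' \in S by apply: hsub; rewrite in_cons s'l orbT.
    have es := inj_iter hc0 hst (lexx c0) hsS hs'S (etrans (esym hq2) hq2').
    by move: sl; rewrite es s'l.
  - exact: Qdep.
  - exact: bias.
  - by apply: IH => // x hx; apply: hsub; rewrite in_cons hx orbT.
rewrite /cond_prob /=.
rewrite (bridge _ (fun h => if all (fun p => Xval f M A h p == a p.1 p.2) (window n) then 1 else 0)).
have hn : forall g s, s \in S ->
    nth false (map (fun yq => yq.1 g) YQ) (index s S) = Yf M A s g.
  by move=> g s hs; rewrite /YQ -map_comp (nth_map 0) ?index_mem // nth_index.
have E : (fun h => if all (fun p => Xval f M A h p == a p.1 p.2) (window n) then 1 else 0 : R)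
         = (fun g => Hf (map (fun yq => yq.1 g) YQ) g).
  apply: functional_extensionality => g; rewrite /Hf /ind.
  congr (if _ then _ else _); apply: eq_in_all => -[i j] hp /=.
  have /andP[_ /= hj] := window_bound hp.
  rewrite (@Xval_split f M c0 A g i j ltac:(lia) ltac:(lia)); congr (_ == _).
  apply: Xval_Z => /=; rewrite hn //; exact: (in_src_win hp).
rewrite E.
have hV : V D (size YQ) Hf = V L0 (size YQ) Hf.
  apply: V_eq => zs; exact: (Ex_restrict (hd zs) (@ns_sub f n c0 M (ltW hM))).
have G := Gmain hb hd (hok S (undup_uniq _) (fun _ h => h)).
by move: G; rewrite hV /YQ size_map.
Qed.

End Final.

Theorem mainTheorem11 (R : realType) (f : int -> int) (n : nat)
    (a : int -> int -> bool) :
  infinite_to_one_onto f -> (1 <= n)%N ->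
  forall eps : R, 0 < eps ->
  exists m : int, forall (M N : int) (A B : int -> bool),
    m < M -> m < N ->
    `| cond_prob R f n a M A - cond_prob R f n a N B | < eps.
Proof.
move=> _ _ eps heps.
have [c0 [hc0 hst]] := stab f n.
set r := size (src f n c0).
set K := Num.Def.archi_bound ((r%:R : R) / eps).
have hK : (r%:R : R) / eps < K%:R.
  by apply: archi_boundP; apply: divr_ge0; [exact: ler0n | exact: ltW].
exists (c0 + K%:Z) => M N A B hM hN.
have aM := @approx R f n a c0 hc0 hst M A ltac:(lia).
have aN := @approx R f n a c0 hc0 hst N B ltac:(lia).
set Vv := V _ _ _ in aM aN.
set p := (1/3 : R) ^+ K.
have bM : (1/3 : R) ^+ steps M c0 <= p.
  apply: ler_wiXn2l; try lra. rewrite /steps ifT; lia.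
have bN : (1/3 : R) ^+ steps N c0 <= p.
  apply: ler_wiXn2l; try lra. rewrite /steps ifT; lia.
have pM0 : (0 : R) <= (1/3) ^+ steps M c0 by apply: exprn_ge0; lra.
have pN0 : (0 : R) <= (1/3) ^+ steps N c0 by apply: exprn_ge0; lra.
have p0 : (0 : R) < p by apply: exprn_gt0; lra.
have r0 : (0 : R) <= r%:R by exact: ler0n.
have hKp : (K%:R : R) * p <= 1.
  have h1 : (K < 3 ^ K)%N by apply: ltn_expl.
  have h2 : (K%:R : R) <= (3 ^ K)%:R by rewrite ler_nat ltnW.
  have h4 : ((3 ^ K)%:R : R) * p = 1.
    by rewrite natrX /p -exprMn (_ : 3%:R * (1/3) = 1 :> R) ?expr1n //; field.
  have := ler_wpM2r (ltW p0) h2; lra.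
have hr : (r%:R : R) < K%:R * eps by move: hK; rewrite ltr_pdivrMr.
have e1 : (r%:R : R) * ((1/3) ^+ steps M c0) <= r%:R * p by apply: ler_wpM2l.
have e2 : (r%:R : R) * ((1/3) ^+ steps N c0) <= r%:R * p by apply: ler_wpM2l.
have e3 : (r%:R : R) * p < eps.
  have e3' : (r%:R : R) * p < K%:R * eps * p by rewrite ltr_pM2r.
  have e4 : eps * (K%:R * p) <= eps * 1 by apply: ler_wpM2l => //; exact: ltW.
  lra.
have tri := ler_distD Vv (cond_prob R f n a M A) (cond_prob R f n a N B).
rewrite distrC in aN.
have aM' : `|cond_prob R f n a M A - Vv| <= r%:R * ((1/3) ^+ steps M c0) / 2 by rewrite mulrA in aM.
have aN' : `|Vv - cond_prob R f n a N B| <= r%:R * ((1/3) ^+ steps N c0) / 2 by rewrite mulrA in aN.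
lra.
Qed.
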